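(* Let $C=p_r\dots p_s$ be a configuration of g-2PATH satisfying the condition of noninterference of extensions (CNI). Then (1) if $(i,j)\in K$ and $i+1\le 0$, then $V(i,j)=V(i+1,j)$; and (2) if $(i,j)\in K$ and $0\le j-1$, then $U(i,j)=U(i,j-1)$.
   Context: Positions are elements of $\mathbb{Z}^2$; with $\epsilon_0=(1,0),\epsilon_1=(0,1),\epsilon_2=(-1,0),\epsilon_3=(0,-1)$, positions $p,p'$ are adjacent if $p'-p$ is some $\epsilon_i$. A configuration of g-2PATH is a sequence $C=p_r\dots p_s$ ($r\le0\le s$) of positions with $p_0=(0,0)$, consecutive positions adjacent, all positions distinct, and $p_l,p_m$ not adjacent whenever $|l-m|\ge2$. For $p\in C$, $\mathrm{bc}_C(p)=(b_0,\dots,b_3)$ with $b_i=1$ iff $p+\epsilon_i\in C$. For fixed $C$ and $r\le i\le0\le j\le s$: $W(i,j)$ is the set of pairs $(x_0,x_1)$ of finite, possibly empty, sequences of positions such that $x_0p_i\dots p_jx_1$ is a configuration $C'$ of g-2PATH (with general at $p_0$) with $\mathrm{bc}_{C'}(p_l)=\mathrm{bc}_C(p_l)$ for all $i\le l\le j$; $U(i,j)$ and $V(i,j)$ are the sets of first, respectively second, components of elements of $W(i,j)$. $\mathrm{NI}(i,j)$ is the statement $W(i,j)=U(i,j)\times V(i,j)$. Define $I=\{(i,j): r\le i-1,\ W(i,j)\text{ infinite},\ W(i-1,j)\text{ finite}\}$, $J=\{(i,j): j+1\le s,\ W(i,j)\text{ infinite},\ W(i,j+1)\text{ finite}\}$,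 $K=\{(i,j): W(i,j)\text{ finite}\}$ (all with $r\le i\le0\le j\le s$). $C$ satisfies CNI if $\mathrm{NI}(i,j)$ holds for every $(i,j)\in I\cup J\cup K$. *)

(* Defs.v *)
From mathcomp Require Import all_boot all_order all_algebra.
Set Implicit Arguments. Unset Strict Implicit. Unset Printing Implicit Defensive.
Import Order.TTheory GRing.Theory Num.Theory.
Local Open Scope ring_scope.

Definition pos := (int * int)%type.

Definition pos0 : pos := (0, 0).

Definition padd (p q : pos) : pos := (p.1 + q.1, p.2 + q.2).

Definition eps (d : 'I_4) : pos :=
  match nat_of_ord d with
  | 0%N => (1, 0)
  | 1%N => (0, 1)
  | 2%N => (-1, 0)
  | _ => (0, -1)
  end.

Definition adj (p p' : pos) : bool := [exists d : 'I_4, p' == padd p (eps d)].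

(** A finite sequence of positions q_0 ... q_(n-1) satisfying the path
    conditions of g-2PATH (indices shifted so they start at 0). *)
Definition path_ok (s : seq pos) : Prop :=
  [/\ (forall n : nat, (n.+1 < size s)%N -> adj (nth pos0 s n) (nth pos0 s n.+1)),
      uniq s &
      (forall n m : nat, (n < size s)%N -> (m < size s)%N -> (n.+2 <= m)%N ->
         ~~ adj (nth pos0 s n) (nth pos0 s m))].

(** A configuration C = p_r ... p_s of g-2PATH is represented by the list
    [l = p_r; ...; p_s] together with k = -r, so that p_m = nth l (k + m),
    i.e. the general p_0 is at list position k. *)
Definition is_config (l : seq pos) (k : nat) : Prop :=
  [/\ (k < size l)%N, nth pos0 l k = pos0 & path_ok l].

(** Indices i, j with r <= i <= 0 <= j <= s are represented by list positions
    a = k + i and b = k + j, so a <= k <= b < size l. *)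
Definition segment (l : seq pos) (a b : nat) : seq pos :=
  take (b - a).+1 (drop a l).

(** W(i,j): pairs (x0,x1) such that C' = x0 p_i..p_j x1 is a configuration
    of g-2PATH with general at p_0 and bc_C'(p_m) = bc_C(p_m) for i <= m <= j.
    (In C' the general p_0 sits at list position size x0 + (k - a), and it is
    automatically (0,0); so only the path conditions need to be imposed.)
    bc_C'(p) = bc_C(p) means: for each direction d, p + eps_d is in C' iff it
    is in C. *)
Definition W (l : seq pos) (k a b : nat) (x : seq pos * seq pos) : Prop :=
  let C' := x.1 ++ segment l a b ++ x.2 in
  path_ok C' /\
  (forall m : nat, (a <= m <= b)%N -> forall d : 'I_4,
     (padd (nth pos0 l m) (eps d) \in C') = (padd (nth pos0 l m) (eps d) \in l)).

Definition U (l : seq pos) (k a b : nat) (x0 : seq pos) : Prop :=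
  exists x1, W l k a b (x0, x1).

Definition V (l : seq pos) (k a b : nat) (x1 : seq pos) : Prop :=
  exists x0, W l k a b (x0, x1).

Definition NI (l : seq pos) (k a b : nat) : Prop :=
  forall x0 x1, W l k a b (x0, x1) <-> (U l k a b x0 /\ V l k a b x1).

Definition finite_pairs (P : seq pos * seq pos -> Prop) : Prop :=
  exists s : seq (seq pos * seq pos), forall x, P x -> x \in s.

Definition Wfin (l : seq pos) (k a b : nat) : Prop := finite_pairs (W l k a b).

Definition in_range (l : seq pos) (k a b : nat) : Prop :=
  (a <= k)%N /\ (k <= b)%N /\ (b < size l)%N.

Definition inI (l : seq pos) (k a b : nat) : Prop :=
  [/\ in_range l k a b, (1 <= a)%N, ~ Wfin l k a b & Wfin l k a.-1 b].

Definition inJ (l : seq pos) (k a b : nat) : Prop :=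
  [/\ in_range l k a b, (b.+1 < size l)%N, ~ Wfin l k a b & Wfin l k a b.+1].

Definition inK (l : seq pos) (k a b : nat) : Prop :=
  in_range l k a b /\ Wfin l k a b.

Definition CNI (l : seq pos) (k : nat) : Prop :=
  forall a b : nat, inI l k a b \/ inJ l k a b \/ inK l k a b -> NI l k a b.

(* Main.v *)
Require Import Defs.
From mathcomp Require Import all_boot all_order all_algebra.
From mathcomp Require Import zify.
From Stdlib Require Import Classical.

Lemma adj_sym {p q : pos} : adj p q -> adj q p.
Proof.
case: p => x y; move/existsP=> [[[|[|[|[|d]]]] Hd] /eqP ->] //;
  apply/existsP.
- exists (Ordinal (isT : (2 < 4)%N)); rewrite /padd /eps /=; apply/eqP; congr pair; lia.
- exists (Ordinal (isT : (3 < 4)%N)); rewrite /padd /eps /=; apply/eqP; congr pair; lia.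
- exists (Ordinal (isT : (0 < 4)%N)); rewrite /padd /eps /=; apply/eqP; congr pair; lia.
- exists (Ordinal (isT : (1 < 4)%N)); rewrite /padd /eps /=; apply/eqP; congr pair; lia.
Qed.

Lemma adj_irr (p : pos) : ~~ adj p p.
Proof.
case: p => x y; apply/existsP => -[[[|[|[|[|d]]]] Hd] /eqP] //;
  rewrite /padd /eps /= => -[]; lia.
Qed.

Lemma adj_eps (p : pos) d : adj p (padd p (eps d)).
Proof. by apply/existsP; exists d. Qed.

Lemma nbr_mem s n y : path_ok s -> (n < size s)%N -> adj (nth pos0 s n) y ->
 (y \in s) = ((0 < n)%N && (y == nth pos0 s n.-1)) || ((n.+1 < size s)%N && (y == nth pos0 s n.+1)).
Proof.
case=> Hadj Huniq Hna Hn Hy.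
apply/idP/idP.
- move=> /(nthP pos0) [m Hm0 Hym]; subst y; have Hm : (m < size s)%N := Hm0; clear Hm0.
  case: (ltngtP m n) => Hmn.
  + have [E0|E0] := boolP (m.+1 == n).
      have E : m.+1 = n by apply/eqP.
      by apply/orP; left; apply/andP; split; [lia| apply/eqP; congr nth; lia].
    have E : m.+1 <> n by apply/eqP.
    have := Hna m n Hm Hn ltac:(lia); by rewrite (adj_sym Hy).
  + have [E0|E0] := boolP (m == n.+1).
      have E : m = n.+1 by apply/eqP.
      by apply/orP; right; apply/andP; split; [lia| apply/eqP; congr nth; lia].
    have E : m <> n.+1 by apply/eqP.
    have := Hna n m Hn Hm ltac:(lia); by rewrite Hy.
  + by subst m; move: Hy; rewrite (negbTE (adj_irr _)).
- by case/orP => /andP [H /eqP ->]; apply: mem_nth; [change (n.-1 < @size pos s)%N | change (n.+1 < @size pos s)%N]; lia.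
Qed.

Lemma bc_same s1 s2 n1 n2 : path_ok s1 -> path_ok s2 -> (n1 < size s1)%N -> (n2 < size s2)%N ->
  nth pos0 s1 n1 = nth pos0 s2 n2 -> (0 < n1)%N = (0 < n2)%N ->
  ((0 < n1)%N -> nth pos0 s1 n1.-1 = nth pos0 s2 n2.-1) ->
  (n1.+1 < size s1)%N = (n2.+1 < size s2)%N ->
  ((n1.+1 < size s1)%N -> nth pos0 s1 n1.+1 = nth pos0 s2 n2.+1) ->
  forall d, (padd (nth pos0 s2 n2) (eps d) \in s1) = (padd (nth pos0 s2 n2) (eps d) \in s2).
Proof.
move=> P1 P2 L1 L2 E0 Ep Ep' Es Es' d.
rewrite (@nbr_mem s1 n1 _ P1 L1) ?E0 ?adj_eps // (@nbr_mem s2 n2 _ P2 L2) ?adj_eps //.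
move: Ep Ep' Es Es'; case: (0 < n1)%N; case: (n1.+1 < size s1)%N => <- H1 <- H2 /=;
  by rewrite ?H1 ?H2.
Qed.

Lemma take_seg (l : seq pos) a b : (a <= b)%N -> take a l ++ segment l a b = take b.+1 l.
Proof. by move=> H; rewrite /segment -takeD; congr take; lia. Qed.

Lemma seg_drop (l : seq pos) a b : (a <= b)%N -> segment l a b ++ drop b.+1 l = drop a l.
Proof.
move=> H; rewrite /segment.
have -> : b.+1 = (b - a).+1 + a by lia.
by rewrite -drop_drop cat_take_drop.
Qed.

Lemma seg_whole (l : seq pos) a b : (a <= b)%N -> take a l ++ segment l a b ++ drop b.+1 l = l.
Proof. by move=> H; rewrite seg_drop // cat_take_drop. Qed.

Lemma seg_cons (l : seq pos) a b : (a < b)%N -> (b < size l)%N ->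
  segment l a b = nth pos0 l a :: segment l a.+1 b.
Proof.
move=> H1 H2; rewrite /segment (drop_nth pos0); last by lia.
by have -> : b - a = (b - a.+1).+1 by lia.
Qed.

Lemma seg_rcons (l : seq pos) a b : (a < b)%N -> (b < size l)%N ->
  segment l a b = rcons (segment l a b.-1) (nth pos0 l b).
Proof.
move=> H1 H2; rewrite /segment.
have -> : (b.-1 - a).+1 = b - a by lia.
rewrite (take_nth pos0) ?nth_drop; last by rewrite size_drop; lia.
by have -> : a + (b - a) = b by lia.
Qed.

Lemma nth_tc (l : seq pos) x b i : (i <= b)%N -> (b < size l)%N ->
  nth pos0 (take b.+1 l ++ x) i = nth pos0 l i.
Proof.
move=> H1 H2; rewrite nth_cat size_take.
have -> : (if (b.+1 < size l)%N then b.+1 else size l) = b.+1 by case: ifP; lia.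
by rewrite ifT ?nth_take //; lia.
Qed.

Lemma nth_cd (l x : seq pos) a i : (a <= size l)%N -> (size x <= i)%N ->
  nth pos0 (x ++ drop a l) i = nth pos0 l (i - size x + a).
Proof.
move=> H1 H2; rewrite nth_cat ifF; last by lia.
by rewrite nth_drop addnC.
Qed.

Theorem lemma6 (l : seq pos) (k : nat) :
  is_config l k -> CNI l k ->
  (forall a b : nat, inK l k a b -> (a.+1 <= k)%N ->
     forall x1, V l k a b x1 <-> V l k a.+1 b x1) /\
  (forall a b : nat, inK l k a b -> (k < b)%N ->
     forall x0, U l k a b x0 <-> U l k a b.-1 x0).
Proof.
move=> [Hk H0 Pl] Hcni; split.
- move=> a b [[Hak [Hkb Hbl]] Hfin] Hak1 x1; split.
  + move=> [x0 [HP HB]]; exists (x0 ++ [:: nth pos0 l a]); rewrite /W /=.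
    rewrite (@seg_cons l a b) in HP HB; try lia.
    rewrite -catA; split => // m /andP [Hm1 Hm2] d; apply: HB; apply/andP; split; lia.
  + move=> HV.
    have HNI : NI l k a.+1 b.
      apply: Hcni; case: (classic (Wfin l k a.+1 b)) => Hf.
        by right; right; split => //; split; lia.
      by left; split => //; split; lia.
    have HU : U l k a.+1 b (take a.+1 l).
      exists (drop b.+1 l); rewrite /W /= seg_whole; last by lia.
      by split.
    have [HP HB] := (proj2 (HNI _ _) (conj HU HV)).
    exists (take a l); move: HP HB; rewrite /W /= !catA !take_seg; try lia.
    move=> HP HB; split => // m /andP [Hm1 Hm2] d.
    case: (eqVneq m a) => [->|Hma]; last by apply: HB; apply/andP; split; lia.
    have Ls : (b.+1 <= size (take b.+1 l ++ x1))%N by rewrite size_cat size_take; case: ifP; lia.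
    apply: (@bc_same _ _ a a) => //; try lia.
    * by rewrite nth_tc //; lia.
    * by move=> _; rewrite nth_tc //; lia.
    * by move=> _; rewrite nth_tc //; lia.
- move=> a b [[Hak [Hkb Hbl]] Hfin] Hkb1 x0; split.
  + move=> [x1 [HP HB]]; exists (nth pos0 l b :: x1); rewrite /W /=.
    rewrite (@seg_rcons l a b) in HP HB; try lia.
    rewrite cat_rcons in HP HB; split => // m /andP [Hm1 Hm2] d; apply: HB; apply/andP; split; lia.
  + move=> HU.
    have HNI : NI l k a b.-1.
      apply: Hcni; case: (classic (Wfin l k a b.-1)) => Hf.
        by right; right; split => //; split; lia.
      right; left; split => //; first (split; lia); first lia.
      by have -> : b.-1.+1 = b by lia.
    have HV : V l k a b.-1 (drop b l).
      exists (take a l); rewrite /W /=.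
      have E : b = b.-1.+1 by lia.
      by rewrite [in drop b l]E seg_whole; [split | lia].
    have [HP HB] := (proj2 (HNI _ _) (conj HU HV)).
    exists (drop b.+1 l); move: HP HB; rewrite /W /=.
    have E : b = b.-1.+1 by lia.
    rewrite [in drop b l]E !seg_drop; try lia.
    move=> HP HB; split => // m /andP [Hm1 Hm2] d.
    case: (eqVneq m b) => [->|Hmb]; last by apply: HB; apply/andP; split; lia.
    have Ls : size (x0 ++ drop a l) = size x0 + (size l - a) by rewrite size_cat size_drop.
    apply: (@bc_same _ _ (size x0 + (b - a)) b) => //; rewrite ?Ls; try lia.
    * by rewrite nth_cd; [congr nth|..]; lia.
    * by move=> _; rewrite nth_cd; [congr nth|..]; lia.
    * by move=> _; rewrite nth_cd; [congr nth|..]; lia.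
Qed.
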